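(* Let $\Sigma=(X,U_c,\phi)$ be a control system (in the sense defined in the context) satisfying the standing assumptions: (a) $U_c=BC(\mathbb{R}_{\geq 0};U)$; (b) $0$ is the unique equilibrium point of $\Sigma$; (c) $\Sigma$ is forward-complete. If $\Sigma$ admits an FTISS Lyapunov functional, then $\Sigma$ is finite-time input-to-state stable (FTISS), i.e., there exist $\beta\in\mathcal{GKL}$ and $\gamma\in\mathcal{K}$ such that $$\|\phi(t,x,u)\|_X\leq \beta(\|x\|_X,t)+\gamma(\|u\|_{U_c})\quad\text{for all }(t,x,u)\in\mathbb{R}_{\geq 0}\times X\times U_c.$$
   Context: $\mathbb{R}_{\geq 0}=[0,\infty)$, $\mathbb{R}_{>0}=(0,\infty)$. $BC(\mathbb{R}_{\geq 0};U)$ is the set of continuous $u:\mathbb{R}_{\geq0}\to U$ with $\|u\|_{U_c}:=\sup_{s\geq 0}\|u(s)\|_U<\infty$. Control system: $X$, $U$ are Banach spaces, $U_c\subset\{u:\mathbb{R}_{\geq0}\to U\}$ is a normed vector space such that (i) for all $u\in U_c$, $\tau\geq 0$, the shift $u(\cdot+\tau)\in U_c$ with $\|u(\cdot+\tau)\|_{U_c}\le\|u\|_{U_c}$; (ii) for $u_1,u_2\in U_c$ and $t>0$, the concatenation equal to $u_1(\tau)$ for $\tau\in[0,t]$ and $u_2(\tau-t)$ otherwise belongs to $U_c$. The transition map $\phi:D_\phi\to X$, $D_\phi\subseteq \mathbb{R}_{\geq0}\times X\times U_c$, satisfies: $\phi(0,x,u)=x$; causality ($\phi(t,x,\tilde u)=\phi(t,x,u)$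 whenever $\tilde u=u$ on $[0,t]$); $t\mapsto\phi(t,x,u)$ is continuous; cocycle property $\phi(h,\phi(t,x,u),u(t+\cdot))=\phi(t+h,x,u)$. Forward-complete means $\phi(t,x,u)$ is well defined for every $(t,x,u)\in\mathbb{R}_{\geq0}\times X\times U_c$. Equilibrium point $0$: $\phi(t,0,0)=0$ for all $t\ge 0$. Comparison functions: $\mathcal{K}$ = continuous strictly increasing $\gamma:\mathbb{R}_{\geq0}\to\mathbb{R}_{\geq0}$ with $\gamma(0)=0$; $\mathcal{K}_\infty$ = unbounded functions in $\mathcal{K}$. $\beta:\mathbb{R}_{\geq0}\times\mathbb{R}_{\geq0}\to\mathbb{R}_{\geq0}$ is in $\mathcal{GKL}$ if it is continuous, $s\mapsto\beta(s,0)$ is in $\mathcal{K}$, and for each fixed $s$ the map $t\mapsto\beta(s,t)$ is continuous, decreases to zero, and there is a nonnegative continuous function $T(s)$ with $\beta(s,t)=0$ for all $t\geq T(s)$. Lie derivative: for $x\in X$, $u\in U_c$ and $V$ defined near $x$, $\dot V_u(x):=\limsup_{t\to0^+}\frac{V(\phi(t,x,u))-V(x)}{t}$. FTISS Lyapunov functional: a continuous $V:X\to\mathbb{R}_{\geq0}$ for which there exist $M>0$, $\sigma_0\in(0,1)$, $\alpha_1,\alpha_2\in\mathcal{K}_\infty$, $\chi\in\mathcal{K}$ with $\alpha_1(\|x\|_X)\le V(x)\le\alpha_2(\|x\|_X)$ for all $x\in X$, and for all $u\in U_c$: $\|x\|_X\geq\chi(\|u\|_{U_c})\Rightarrow \dot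 V_u(x)\leq -MV^{\sigma_0}(x)$. *)

(* Defs.v *)
From HB Require Import structures.
From mathcomp Require Import all_boot all_order all_algebra.
From mathcomp Require Import all_classical all_reals all_analysis.
Set Implicit Arguments. Unset Strict Implicit. Unset Printing Implicit Defensive.
Import Order.TTheory GRing.Theory Num.Theory.
Import numFieldNormedType.Exports.
Local Open Scope classical_set_scope.
Local Open Scope ring_scope.

Section Defs.
Context {R : realType}.

Definition Rge0 : set R := [set s | 0 <= s].

(** comparison functions, as functions on R considered on [0,oo) *)
Definition class_K (g : R -> R) : Prop :=
  {within Rge0, continuous g} /\
  {in Rge0 &, forall a b, a < b -> g a < g b} /\
  g 0 = 0.

Definition class_Kinf (g : R -> R) : Prop :=
  class_K g /\ (forall M : R, exists s, 0 <= s /\ M < g s).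

Definition class_GKL (b : R -> R -> R) : Prop :=
  {within [set p : R * R | 0 <= p.1 /\ 0 <= p.2], continuous (fun p => b p.1 p.2)} /\
  (forall s t, 0 <= s -> 0 <= t -> 0 <= b s t) /\
  class_K (fun s => b s 0) /\
  (forall s, 0 <= s ->
     {within Rge0, continuous (b s)} /\
     {in Rge0 &, forall t1 t2, t1 <= t2 -> b s t2 <= b s t1} /\
     (b s t @[t --> +oo] --> 0)) /\
  (exists T : R -> R, {within Rge0, continuous T} /\
     (forall s, 0 <= s -> 0 <= T s) /\
     (forall s t, 0 <= s -> T s <= t -> b s t = 0)).

Context {U X : completeNormedModType R}.

(** U_c = BC(R_{>=0}; U): inputs are functions R -> U, only their values on
    [0,oo) matter *)
Definition BC (u : R -> U) : Prop :=
  {within Rge0, continuous u} /\ exists M : R, forall s, 0 <= s -> `|u s| <= M.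

Definition BCnorm (u : R -> U) : R := sup [set `|u s| | s in Rge0].

(** forward-complete control system with input space BC: phi is total *)
Definition control_system (phi : R -> X -> (R -> U) -> X) : Prop :=
  (forall x u, BC u -> phi 0 x u = x) /\
  (forall t x u v, 0 <= t -> BC u -> BC v ->
     (forall s, 0 <= s <= t -> u s = v s) -> phi t x u = phi t x v) /\
  (forall x u, BC u -> {within Rge0, continuous (fun t => phi t x u)}) /\
  (forall t h x u, 0 <= t -> 0 <= h -> BC u ->
     phi h (phi t x u) (fun s => u (t + s)) = phi (t + h) x u).

Definition zero_input : R -> U := fun _ => 0.

Definition equilibrium (phi : R -> X -> (R -> U) -> X) (x : X) : Prop :=
  forall t, 0 <= t -> phi t x zero_input = x.

Definition unique_equilibrium_0 (phi : R -> X -> (R -> U) -> X) : Prop :=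
  equilibrium phi 0 /\ (forall x, equilibrium phi x -> x = 0).

Definition lie_deriv (phi : R -> X -> (R -> U) -> X) (V : X -> R)
    (u : R -> U) (x : X) : \bar R :=
  limf_esup (fun t : R => ((V (phi t x u) - V x) / t)%:E) (0^'+).

Definition FTISS_Lyapunov (phi : R -> X -> (R -> U) -> X) (V : X -> R) : Prop :=
  continuous V /\ (forall x, 0 <= V x) /\
  exists (M sigma0 : R) (a1 a2 chi : R -> R),
    0 < M /\ 0 < sigma0 < 1 /\ class_Kinf a1 /\ class_Kinf a2 /\ class_K chi /\
    (forall x, a1 `|x| <= V x <= a2 `|x|) /\
    (forall u x, BC u -> chi (BCnorm u) <= `|x| ->
       (lie_deriv phi V u x <= (- (M * (V x) `^ sigma0))%:E)%E).

Definition FTISS (phi : R -> X -> (R -> U) -> X) : Prop :=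
  exists b g, class_GKL b /\ class_K g /\
    forall t x u, 0 <= t -> BC u ->
      `|phi t x u| <= b `|x| t + g (BCnorm u).

End Defs.

(* Main.v *)
Require Import Defs.
From HB Require Import structures.
From mathcomp Require Import all_boot all_order all_algebra.
From mathcomp Require Import all_classical all_reals all_analysis.
From mathcomp Require Import ring lra.
Set Implicit Arguments. Unset Strict Implicit. Unset Printing Implicit Defensive.
Import Order.TTheory GRing.Theory Num.Theory.
Import numFieldNormedType.Exports.
Local Open Scope classical_set_scope.
Local Open Scope ring_scope.

Section S.
Context {R : realType}.


Lemma wcP (V : normedModType R) (A : set R) (f : R -> V) :
  {within A, continuous f} -> forall x, A x -> forall e, 0 < e ->
  exists2 d, 0 < d & forall y, A y -> `|x - y| < d -> `|f x - f y| < e.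
Proof.
move=> /subspace_continuousP cf x Ax e e0.
have := cf x Ax; move/cvgrPdist_lt => /(_ e e0); rewrite near_withinE.
case=> d /= d0 H; exists d => // y Ay xy; exact: H.
Qed.

Lemma wcP' (V : normedModType R) (A : set R) (f : R -> V) :
  (forall x, A x -> forall e, 0 < e ->
  exists2 d, 0 < d & forall y, A y -> `|x - y| < d -> `|f x - f y| < e) ->
  {within A, continuous f}.
Proof.
move=> H; apply/subspace_continuousP => x Ax; apply/cvgrPdist_lt => e e0.
rewrite near_withinE; have [d d0 Hd] := H x Ax e e0.
exists d => //= y xy Ay; exact: Hd.
Qed.

Lemma gcP (V : normedModType R) (f : R -> V) :
  continuous f <-> (forall x e, 0 < e ->
  exists2 d, 0 < d & forall y, `|x - y| < d -> `|f x - f y| < e).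
Proof.
split.
  move=> cf x e e0; have := cf x; move/cvgrPdist_lt => /(_ e e0).
  case=> d /= d0 H; exists d => // y xy; exact: H.
move=> H x; apply/cvgrPdist_lt => e e0.
have [d d0 Hd] := H x e e0.
exists d => //= y xy; exact: Hd.
Qed.



Lemma dini (w : R -> R) (a b c : R) :
  0 <= a -> a <= b ->
  (forall x : R, 0 <= x -> forall e : R, 0 < e -> exists2 d : R, 0 < d &
     forall y : R, 0 <= y -> `|x - y| < d -> `|w x - w y| < e) ->
  (forall t : R, a <= t -> t < b -> c < w t -> forall e d : R, 0 < e -> 0 < d ->
     exists h : R, [/\ 0 < h, h < d & w (t + h) <= w t + e * h]) ->
  w a <= c -> w b <= c.
Proof.
move=> a0 ab cw hD wac.
rewrite leNgt; apply/negP => wbc.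
pose K := b - a + 1.
have K0 : 0 < K by rewrite /K; lra.
pose e := (w b - c) / (2 * K).
have e0 : 0 < e by rewrite /e divr_gt0 // ?subr_gt0 // mulr_gt0.
have eK : e * K = (w b - c) / 2.
  by rewrite /e; field; rewrite gt_eqF.
pose g s := c + e * (s - a + 1).
have gmono : forall x y, x <= y -> g x <= g y.
  by move=> x y xy; rewrite /g lerD2l ler_pM2l //; lra.
pose S := [set s | a <= s <= b /\ w s <= g s].
have Sa : S a.
  split; first by rewrite lexx ab.
  by rewrite /g subrr add0r mulr1; lra.
have hsS : has_sup S.
  by split; [exists a | exists b => y [/andP[_ ->]]].
pose s := sup S.
have as_ : a <= s by apply: (sup_upper_bound hsS).
have sb : s <= b by apply: ge_sup; [exists a | move=> y [/andP[_ ->]]].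
have s0 : 0 <= s by apply: le_trans as_.
have ws : w s <= g s.
  rewrite leNgt; apply/negP => H.
  have [d d0 Hd] := cw s s0 (w s - g s) ltac:(by rewrite subr_gt0).
  have [t St ht] := sup_adherent d0 hsS.
  have ts : t <= s by apply: (sup_upper_bound hsS).
  have t0 : 0 <= t by case: St => /andP[+ _] _; apply: le_trans.
  have := Hd t t0; rewrite ger0_norm ?subr_ge0 // => /(_ _).
  move=> /(_ ltac:(rewrite /s in ht *; lra)).
  case: St => _ wt; have := gmono _ _ ts.
  move=> gts /ltr_normlW; lra.
case: (ltP s b) => [sltb | bles]; last first.
  have sb' : s = b by apply/le_anti; rewrite sb bles.
  move: ws; rewrite sb' /g.
  have -> : b - a + 1 = K by [].
  rewrite eK; lra.
case: (ltP (w s) (g s)) => [wlt | wge].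
  have [d d0 Hd] := cw s s0 (g s - w s) ltac:(by rewrite subr_gt0).
  pose t := Num.min b (s + d / 2).
  have st : s < t by rewrite /t lt_min sltb ltrDl divr_gt0.
  have tb : t <= b by rewrite /t ge_min lexx.
  have dst : `|s - t| < d.
    rewrite distrC ger0_norm ?subr_ge0 ?ltW //.
    have : t <= s + d / 2 by rewrite /t ge_min lexx orbT.
    lra.
  have := Hd t (le_trans s0 (ltW st)) dst.
  rewrite distrC => /ltr_normlW => H.
  have St : S t.
    split; first by rewrite tb (le_trans as_ (ltW st)).
    have := gmono _ _ (ltW st); lra.
  have := sup_upper_bound hsS St; rewrite -/s; lra.
have wsg : w s = g s by apply/le_anti; rewrite ws wge.
have cws : c < w s.
  rewrite wsg /g ltrDl mulr_gt0 //; lra.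
have [h [h0 hd wh]] := hD s as_ sltb cws e (b - s) e0 ltac:(by rewrite subr_gt0).
have Sh : S (s + h).
  split; first by apply/andP; split; lra.
  rewrite wsg /g in wh; rewrite /g; lra.
have := sup_upper_bound hsS Sh; rewrite -/s; lra.
Qed.



Lemma concave_powR (p x y : R) : 0 < p -> p < 1 -> 0 < x -> 0 <= y ->
  y `^ p <= x `^ p + p * x `^ (p - 1) * (y - x).
Proof.
move=> p0 p1 x0 y0.
have q0 : 0 < 1 - p by lra.
have B0 : 0 < x `^ (1 - p) by apply: powR_gt0.
have H := @conjugate_powR R (y `^ p) (x `^ (1 - p)) p^-1 (1 - p)^-1
  (powR_ge0 _ _) (ltW B0) ltac:(by rewrite invr_gt0) ltac:(by rewrite invr_gt0)
  ltac:(rewrite !invrK; lra).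
rewrite -!powRrM !mulfV ?gt_eqF // (powRr1 y0) (powRr1 (ltW x0)) !invrK in H.
rewrite -(ler_pM2r B0).
have -> : (x `^ p + p * x `^ (p - 1) * (y - x)) * x `^ (1 - p) =
  x `^ p * x `^ (1 - p) + p * (x `^ (p - 1) * x `^ (1 - p)) * (y - x) by ring.
have -> : x `^ p * x `^ (1 - p) = x.
  rewrite -powRD; last by rewrite (gt_eqF x0) implybT.
  have -> : p + (1 - p) = 1 by ring.
  by rewrite powRr1 // ltW.
have -> : x `^ (p - 1) * x `^ (1 - p) = 1.
  rewrite -powRD; last by rewrite (gt_eqF x0) implybT.
  have -> : p - 1 + (1 - p) = 0 by ring.
  by rewrite powRr0.
lra.
Qed.



Lemma normB_facts (x : R) : x <= `|x| /\ - x <= `|x|.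
Proof. by split; [apply: ler_norm | rewrite -normrN; apply: ler_norm]. Qed.

Lemma maxlip (y z : R) : `|Num.max y 0 - Num.max z 0| <= `|y - z|.
Proof.
have [h1 h2] := normB_facts (y - z).
rewrite ler_norml; case: (leP y 0) => hy; case: (leP z 0) => hz;
  apply/andP; split; lra.
Qed.

Lemma ext_cont (V : normedModType R) (f : R -> V) :
  {within Rge0, continuous f} -> continuous (fun s : R => f (Num.max s 0)).
Proof.
move=> cf; apply/gcP => x e e0.
have [d d0 Hd] := wcP cf (x := Num.max x 0) ltac:(by rewrite /Rge0 /= le_max lexx orbT) e0.
exists d => // y xy; apply: Hd; first by rewrite /Rge0 /= le_max lexx orbT.
exact: le_lt_trans (maxlip x y) xy.
Qed.

Lemma Rge0_itv : Rge0 = [set` `[(0:R), +oo[].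
Proof. by apply/seteqP; split => x; rewrite /Rge0 /= in_itv /= andbT. Qed.

Lemma powR_wcont (p : R) : 0 < p -> {within Rge0, continuous (fun y => y `^ p)}.
Proof.
move=> p0; rewrite Rge0_itv; apply/continuous_within_itvcyP; split.
  move=> x; rewrite in_itv /= andbT => x0.
  apply: differentiable_continuous; apply/derivable1_diffP.
  by apply: derivable_powR; rewrite in_itv /= x0.
by rewrite powR0 ?gt_eqF //; apply: powR_cvg0.
Qed.

Lemma K_ge0 (a : R -> R) : class_K a -> forall s, 0 <= s -> 0 <= a s.
Proof.
move=> [_ [ha a0]] s; rewrite le_eqVlt => /predU1P[<-|s0]; first by rewrite a0.
rewrite -a0; apply: ltW; apply: ha => //; rewrite inE /Rge0 /=; [exact: lexx | exact: ltW].
Qed.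



Lemma inRge0 (x : R) : 0 <= x -> x \in Rge0.
Proof. by rewrite inE. Qed.

Lemma K_lt (a : R -> R) : class_K a -> forall x y, 0 <= x -> x < y -> a x < a y.
Proof.
move=> [_ [ha _]] x y x0 xy; apply: ha => //; apply: inRge0 => //.
exact: le_trans (ltW xy).
Qed.

Lemma K_le (a : R -> R) : class_K a -> forall x y, 0 <= x -> x <= y -> a x <= a y.
Proof.
move=> ha x y x0; rewrite le_eqVlt => /predU1P[->//|xy].
exact/ltW/(K_lt ha).
Qed.

Lemma K_leP (a : R -> R) : class_K a -> forall x y, 0 <= x -> 0 <= y ->
  a x <= a y -> x <= y.
Proof.
move=> ha x y x0 y0 h; rewrite leNgt; apply/negP => yx.
have := K_lt ha y0 yx; lra.
Qed.

Definition ainv (a : R -> R) (y : R) : R :=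
  xget 0 [set s | 0 <= s /\ a s = Num.max y 0].

Lemma ainv_spec (a : R -> R) : class_Kinf a -> forall y,
  0 <= ainv a y /\ a (ainv a y) = Num.max y 0.
Proof.
move=> [hK hinf] y.
suff : exists s, 0 <= s /\ a s = Num.max y 0.
  by move=> /(xgetPex 0); rewrite /ainv.
have m0 : 0 <= Num.max y 0 by rewrite le_max lexx orbT.
have [S [S0 hS]] := hinf (Num.max y 0).
have cS : {within `[0, S], continuous a}.
  have sub : [set` `[0, S]] `<=` (Rge0 : set R).
    by move=> x /=; rewrite in_itv /= => /andP[].
  exact: (continuous_subspaceW sub (proj1 hK)).
have a0 := proj2 (proj2 hK).
have := IVT S0 cS.
move=> /(_ (Num.max y 0)) [|c].
  rewrite a0; apply/andP; split; first by rewrite ge_min m0.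
  by rewrite le_max (ltW hS) orbT.
by rewrite in_itv /= => /andP[c0 _] ac; exists c.
Qed.

Lemma ainv_ge0 (a : R -> R) : class_Kinf a -> forall y, 0 <= ainv a y.
Proof. by move=> ha y; case: (ainv_spec ha y). Qed.

Lemma ainvK (a : R -> R) : class_Kinf a -> forall y, 0 <= y -> a (ainv a y) = y.
Proof.
move=> ha y y0; case: (ainv_spec ha y) => _ ->.
by apply/max_idPl.
Qed.

Lemma ainv_le (a : R -> R) : class_Kinf a -> forall y1 y2, y1 <= y2 ->
  ainv a y1 <= ainv a y2.
Proof.
move=> ha y1 y2 y12; apply: (K_leP (proj1 ha)); try exact: ainv_ge0.
case: (ainv_spec ha y1) => _ ->; case: (ainv_spec ha y2) => _ ->.
by apply: le_max2.
Qed.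

Lemma ainv_lt (a : R -> R) : class_Kinf a -> forall y1 y2, 0 <= y1 -> y1 < y2 ->
  ainv a y1 < ainv a y2.
Proof.
move=> ha y1 y2 y10 y12; rewrite ltNge; apply/negP => h.
have := K_le (proj1 ha) (ainv_ge0 ha y2) h.
rewrite !ainvK //; [lra | lra].
Qed.

Lemma ainv_ub (a : R -> R) : class_Kinf a -> forall s y, 0 <= s -> a s <= y ->
  s <= ainv a y.
Proof.
move=> ha s y s0 h; apply: (K_leP (proj1 ha)) => //; first exact: ainv_ge0.
have y0 : 0 <= y by apply: le_trans h; apply: K_ge0 => //; exact: (proj1 ha).
by rewrite ainvK.
Qed.



Lemma ainv_cont (a : R -> R) : class_Kinf a -> continuous (ainv a).
Proof.
move=> ha; apply/gcP => y0 e e0.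
set s0 := ainv a y0.
have s00 : 0 <= s0 by apply: ainv_ge0.
have as0 : a s0 = Num.max y0 0 by case: (ainv_spec ha y0).
have d10 : 0 < a (s0 + e) - a s0.
  by rewrite subr_gt0; apply: (K_lt (proj1 ha)) => //; lra.
have key : forall d, 0 < d -> d <= a (s0 + e) - a s0 ->
   (e <= s0 -> d <= a s0 - a (s0 - e)) ->
   forall y, `|y0 - y| < d -> `|s0 - ainv a y| < e.
  move=> d d0 hd1 hd2 y yd.
  have hm : `|Num.max y 0 - Num.max y0 0| < d.
    by apply: le_lt_trans (maxlip y y0) _; rewrite distrC.
  move: hm; rewrite ltr_norml => /andP[h1 h2].
  have ay : a (ainv a y) = Num.max y 0 by case: (ainv_spec ha y).
  have y1 : 0 <= ainv a y by apply: ainv_ge0.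
  have up : ainv a y < s0 + e.
    rewrite ltNge; apply/negP => h.
    have := K_le (proj1 ha) (x := s0 + e) ltac:(lra) h; lra.
  have lo : s0 - e < ainv a y.
    case: (leP e s0) => es; last by lra.
    rewrite ltNge; apply/negP => h.
    have := K_le (proj1 ha) y1 h.
    have := hd2 es; lra.
  rewrite ltr_norml; apply/andP; split; lra.
case: (leP e s0) => es.
  have d20 : 0 < a s0 - a (s0 - e).
    by rewrite subr_gt0; apply: (K_lt (proj1 ha)); lra.
  exists (Num.min (a (s0 + e) - a s0) (a s0 - a (s0 - e))).
    by rewrite lt_min d10 d20.
  apply: key; first by rewrite lt_min d10 d20.
    by rewrite ge_min lexx.
  by move=> _; rewrite ge_min lexx orbT.
exists (a (s0 + e) - a s0) => //.
apply: key => //; lra.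
Qed.



Definition cont0 (f : R -> R) := forall x : R, 0 <= x -> forall e : R, 0 < e ->
  exists2 d : R, 0 < d & forall y : R, 0 <= y -> `|x - y| < d -> `|f x - f y| < e.

Lemma cont0_W (v : R -> R) (p c : R) : 0 < p -> (forall t, 0 <= t -> 0 <= v t) ->
  cont0 v -> cont0 (fun t => v t `^ p + c * t).
Proof.
move=> p0 v0 cv x x0 e e0.
have [d1 d10 H1] := wcP (powR_wcont p0) (x := v x) (v0 x x0) (e := e / 2) ltac:(lra).
have [d2 d20 H2] := cv x x0 d1 d10.
have c1 : 0 < `|c| + 1 by rewrite ltr_wpDl.
pose d3 := e / 2 / (`|c| + 1).
have d30 : 0 < d3 by rewrite /d3 divr_gt0 //; lra.
exists (Num.min d2 d3); first by rewrite lt_min d20 d30.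
move=> y y0; rewrite lt_min => /andP[yd2 yd3].
have A := H1 (v y) (v0 y y0) (H2 y y0 yd2).
have B : `|c * (x - y)| < e / 2.
  rewrite normrM.
  have : (`|c| + 1) * d3 = e / 2 by rewrite /d3; field; rewrite gt_eqF.
  move=> E.
  have : `|c| * `|x - y| <= (`|c| + 1) * `|x - y|.
    by rewrite ler_wpM2r // lerDl.
  have : (`|c| + 1) * `|x - y| < (`|c| + 1) * d3 by rewrite ltr_pM2l.
  lra.
have -> : v x `^ p + c * x - (v y `^ p + c * y) = (v x `^ p - v y `^ p) + c * (x - y) by ring.
apply: le_lt_trans (ler_normD _ _) _.
lra.
Qed.


Lemma traj_bound (v : R -> R) (th M sg : R) :
  0 < M -> 0 < sg -> sg < 1 -> 0 <= th ->
  (forall t, 0 <= t -> 0 <= v t) ->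
  cont0 v ->
  (forall t, 0 <= t -> th < v t -> forall eta, 0 < eta ->
     exists2 del, 0 < del & forall h, 0 < h -> h < del ->
       v (t + h) <= v t + (- (M * v t `^ sg) + eta) * h) ->
  forall t, 0 <= t ->
  v t <= Num.max th ((Num.max (v 0 `^ (1 - sg) - M * (1 - sg) * t) 0) `^ (1 - sg)^-1).
Proof.
move=> M0 sg0 sg1 th0 v0 cv hD t t0.
set p := 1 - sg.
have p0 : 0 < p by rewrite /p; lra.
have p1 : p < 1 by rewrite /p; lra.
case: (pselect (exists tau, [/\ 0 <= tau, tau <= t & v tau <= th])).
  case=> tau [tau0 taut vtau].
  have : v t <= th.
    apply: (dini (a := tau) tau0 taut cv) => //.
    move=> s taus st ths e d e0 d0.
    have [del del0 Hdel] := hD s (le_trans tau0 taus) ths e e0.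
    pose h := Num.min d del / 2.
    have hm : 0 < Num.min d del by rewrite lt_min d0 del0.
    have hd : Num.min d del <= d by rewrite ge_min lexx.
    have hdel : Num.min d del <= del by rewrite ge_min lexx orbT.
    exists h; split; rewrite /h; try lra.
    have := Hdel h ltac:(rewrite /h; lra) ltac:(rewrite /h; lra).
    have : 0 <= M * v s `^ sg * h.
      by rewrite mulr_ge0 // ?mulr_ge0 ?powR_ge0 // ?ltW //; rewrite /h; lra.
    have -> : (- (M * v s `^ sg) + e) * h = e * h - M * v s `^ sg * h by ring.
    rewrite /h; lra.
  by move=> h; apply: le_trans h _; rewrite le_max lexx.
move=> nA.
have vth : forall tau, 0 <= tau -> tau <= t -> th < v tau.
  move=> tau tau0 taut; rewrite ltNge; apply/negP => h; apply: nA; exists tau; split => //.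
pose W tau := v tau `^ p + M * p * tau.
have cW : cont0 W by apply: cont0_W.
have hW := dini (w := W) (a := 0) (b := t) (c := W 0) (lexx 0) t0 cW.
have : W t <= W 0.
  apply: hW => //.
  move=> s s0 st _ e d e0 d0.
  have vs0 : 0 < v s by apply: le_lt_trans th0 (vth s s0 (ltW st)).
  pose eta := e * v s `^ sg / p.
  have eta0 : 0 < eta by rewrite /eta divr_gt0 // mulr_gt0 // powR_gt0.
  have [del del0 Hdel] := hD s s0 (vth s s0 (ltW st)) eta eta0.
  pose h := Num.min d del / 2.
  have hm : 0 < Num.min d del by rewrite lt_min d0 del0.
  have hd : Num.min d del <= d by rewrite ge_min lexx.
  have hdel : Num.min d del <= del by rewrite ge_min lexx orbT.
  have h0 : 0 < h by rewrite /h; lra.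
  exists h; split; rewrite -/h; try (rewrite /h; lra).
  have H1 := Hdel h h0 ltac:(rewrite /h; lra).
  have H2 := concave_powR p0 p1 vs0 (v0 (s + h) ltac:(lra)).
  have B0 : 0 < p * v s `^ (p - 1) by rewrite mulr_gt0 // powR_gt0.
  have H3 : p * v s `^ (p - 1) * (v (s + h) - v s) <=
            p * v s `^ (p - 1) * ((- (M * v s `^ sg) + eta) * h).
    by rewrite ler_pM2l //; lra.
  have E1 : v s `^ (p - 1) * v s `^ sg = 1.
    rewrite -powRD; last by rewrite (gt_eqF vs0) implybT.
    have -> : p - 1 + sg = 0 by rewrite /p; ring.
    by rewrite powRr0.
  have E2 : p * v s `^ (p - 1) * ((- (M * v s `^ sg) + eta) * h) =
            - (M * p * h) + e * h.
    rewrite /eta.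
    have -> : p * v s `^ (p - 1) * ((- (M * v s `^ sg) + e * v s `^ sg / p) * h)
       = (v s `^ (p - 1) * v s `^ sg) * (- (M * p * h) + e * h * (p / p)) by ring.
    by rewrite E1 divff ?gt_eqF // mulr1 mul1r.
  rewrite E2 in H3.
  rewrite /W; lra.
rewrite /W mulr0 addr0 => hWt.
have vt0 : 0 <= v t `^ p by apply: powR_ge0.
have hle : v t `^ p <= Num.max (v 0 `^ p - M * p * t) 0.
  rewrite le_max; apply/orP; left.
  have : 0 <= M * p * t by rewrite !mulr_ge0 // ltW.
  lra.
have -> : v t = (v t `^ p) `^ p^-1.
  by rewrite -powRrM divff ?gt_eqF // powRr1 // v0.
apply: le_trans (_ : _ <= Num.max (v 0 `^ p - M * p * t) 0 `^ p^-1) _.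
  apply: ge0_ler_powR; [by rewrite invr_ge0 ltW | by rewrite nnegrE |
    by rewrite nnegrE le_max lexx orbT | exact: hle].
by rewrite le_max lexx orbT.
Qed.

End S.

Section S9.
Context {R : realType}.


Lemma lie_unpack (f : R -> R) (L : R) :
  (limf_esup (fun t => (f t)%:E) (0^'+) <= L%:E)%E ->
  forall eta, 0 < eta -> exists2 del, 0 < del &
    forall h, 0 < h -> h < del -> f h <= L + eta.
Proof.
move=> H eta eta0.
have : (limf_esup (fun t => (f t)%:E) (0^'+) < (L + eta)%:E)%E.
  apply: (le_lt_trans H); rewrite lte_fin; lra.
rewrite limf_esupE => /ereal_inf_lt [y [W hW <-]] hy.
move: hW; rewrite /at_right /within => /nbhs_ballP [d /= d0 Hd].
exists d => // h h0 hd.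
have : ((f h)%:E <= ereal_sup [set (f t)%:E | t in W])%E.
  apply: ereal_sup_ubound; exists h => //; apply: Hd => //=.
  by rewrite /ball /= sub0r normrN gtr0_norm.
move=> /le_lt_trans /(_ hy); rewrite lte_fin; lra.
Qed.


Context {U : completeNormedModType R}.

Lemma BC_hassup (u : R -> U) : BC u -> has_sup [set `|u s| | s in Rge0].
Proof.
case=> _ [M hM]; split.
  by exists `|u 0|, 0 => //; rewrite /Rge0 /=.
by exists M => y [s s0 <-]; apply: hM.
Qed.

Lemma BCnorm_ub (u : R -> U) s : BC u -> 0 <= s -> `|u s| <= BCnorm u.
Proof.
move=> hu s0; apply: (sup_upper_bound (BC_hassup hu)).
by exists s.
Qed.

Lemma BCnorm_ge0 (u : R -> U) : BC u -> 0 <= BCnorm u.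
Proof. by move=> hu; apply: le_trans (BCnorm_ub hu (lexx 0)). Qed.

Lemma BC_shift (u : R -> U) t : BC u -> 0 <= t ->
  BC (fun s => u (t + s)) /\ BCnorm (fun s => u (t + s)) <= BCnorm u.
Proof.
move=> hu t0; split.
  case: hu => cu [M hM]; split; last first.
    by exists M => s s0; apply: hM; rewrite addr_ge0.
  apply: wcP' => x x0 e e0; rewrite /Rge0 /= in x0.
  have [d d0 Hd] := wcP cu (x := t + x) ltac:(rewrite /Rge0 /=; lra) e0.
  exists d => // y y0 xy; rewrite /Rge0 /= in y0; apply: Hd; first by rewrite /Rge0 /=; lra.
  by have -> : t + x - (t + y) = x - y by ring.
apply: ge_sup; first by exists `|u (t + 0)|, 0 => //; rewrite /Rge0 /=.
move=> y [s s0 <-]; apply: BCnorm_ub => //.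
by rewrite addr_ge0.
Qed.

End S9.

Section S10.
Context {R : realType}.


Lemma pair_cont (f g : R -> R) : continuous f -> continuous g ->
  continuous (fun z : R * R => f z.1 + g z.2).
Proof.
move=> cf cg z.
apply: continuousD.
  apply: (@continuous_comp _ _ _ fst f); last exact: cf.
  exact: cvg_fst.
apply: (@continuous_comp _ _ _ snd g); last exact: cg.
exact: cvg_snd.
Qed.

End S10.

Section S11.
Context {R : realType}.

Context {U X : completeNormedModType R}.

Lemma sys_bound (phi : R -> X -> (R -> U) -> X) (V : X -> R) (M sg : R)
  (a1 a2 chi : R -> R) :
  control_system phi -> continuous V -> (forall x, 0 <= V x) ->
  0 < M -> 0 < sg -> sg < 1 -> class_Kinf a1 -> class_Kinf a2 -> class_K chi ->
  (forall x, a1 `|x| <= V x <= a2 `|x|) ->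
  (forall u x, BC u -> chi (BCnorm u) <= `|x| ->
     (lie_deriv phi V u x <= (- (M * (V x) `^ sg))%:E)%E) ->
  forall t x u, 0 <= t -> BC u ->
  V (phi t x u) <= Num.max (a2 (chi (BCnorm u)))
    ((Num.max (V x `^ (1 - sg) - M * (1 - sg) * t) 0) `^ (1 - sg)^-1).
Proof.
move=> [cs0 [_ [cscont cscoc]]] Vc V0 M0 sg0 sg1 ha1 ha2 hchi hsand hlie t x u t0 hu.
have r0 := BCnorm_ge0 hu.
have chir0 : 0 <= chi (BCnorm u) by apply: K_ge0.
have th0 : 0 <= a2 (chi (BCnorm u)) by apply: K_ge0 => //; exact: (proj1 ha2).
have := @traj_bound R (fun t => V (phi t x u)) _ M sg M0 sg0 sg1 th0
  (fun t _ => V0 _) _ _ t t0.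
rewrite cs0 //; apply.
- move=> tau tau0 e e0.
  have := Vc (phi tau x u); move/cvgrPdist_lt => /(_ e e0) /nbhs_ballP [d1 d10 H1].
  have [d d0 Hd] := wcP (cscont x u hu) (x := tau) tau0 d10.
  exists d => // y y0 ty; apply: H1.
  rewrite -ball_normE /ball_ /=; exact: Hd.
- move=> tau tau0 thv eta eta0.
  have [hut hnorm] := BC_shift hu tau0.
  set xt := phi tau x u.
  have cond : chi (BCnorm (fun s => u (tau + s))) <= `|xt|.
    apply: le_trans (_ : chi (BCnorm u) <= _).
      apply: K_le => //; exact: BCnorm_ge0.
    rewrite leNgt; apply/negP => h.
    have := K_le (proj1 ha2) (normr_ge0 xt) (ltW h).
    have := hsand xt; rewrite -/xt => /andP[_ h2].
    lra.
  have H := hlie _ xt hut cond.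
  have [del del0 Hdel] := lie_unpack H eta0.
  exists del => // h h0 hdel.
  have := Hdel h h0 hdel.
  rewrite /xt cscoc //; last exact: ltW.
  rewrite ler_pdivrMr //; lra.
Qed.

End S11.

Section S12.
Context {R : realType}.


Lemma comp_cont (f g : R -> R) : continuous f -> continuous g ->
  continuous (fun x => g (f x)).
Proof. by move=> cf cg x; apply: continuous_comp (cf x) (cg (f x)). Qed.

Lemma lin_cont (c : R) : continuous (fun t : R => c * t).
Proof.
apply/gcP => x e e0.
have c1 : 0 < `|c| + 1 by rewrite ltr_wpDl.
exists (e / (`|c| + 1)); first by rewrite divr_gt0.
move=> y xy.
have -> : c * x - c * y = c * (x - y) by ring.
rewrite normrM.
have E : (`|c| + 1) * (e / (`|c| + 1)) = e by field; rewrite gt_eqF.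
have : `|c| * `|x - y| <= (`|c| + 1) * `|x - y| by rewrite ler_wpM2r // lerDl.
have : (`|c| + 1) * `|x - y| < (`|c| + 1) * (e / (`|c| + 1)) by rewrite ltr_pM2l.
lra.
Qed.

Definition pw (p y : R) := (Num.max y 0) `^ p.

Lemma pw_cont p : 0 < p -> continuous (pw p).
Proof. by move=> p0; apply: (ext_cont (powR_wcont p0)). Qed.

Lemma pw_ge0 p y : 0 <= pw p y.
Proof. exact: powR_ge0. Qed.

Lemma pw_le p y1 y2 : 0 <= p -> y1 <= y2 -> pw p y1 <= pw p y2.
Proof.
move=> p0 y12; apply: ge0_ler_powR; [exact: p0 | by rewrite nnegrE le_max lexx orbT |
  by rewrite nnegrE le_max lexx orbT | exact: le_max2].
Qed.

Lemma pwE p y : 0 <= y -> pw p y = y `^ p.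
Proof. by move=> y0; rewrite /pw; congr (_ `^ _); apply/max_idPl. Qed.

Lemma pw_neg p y : 0 < p -> y <= 0 -> pw p y = 0.
Proof.
move=> p0 y0; rewrite /pw; have -> : Num.max y 0 = 0 by apply/max_idPr.
by rewrite powR0 // gt_eqF.
Qed.

Lemma ainv0 (a : R -> R) : class_Kinf a -> ainv a 0 = 0.
Proof.
move=> ha; apply/le_anti; rewrite ainv_ge0 // andbT.
apply: (K_leP (proj1 ha)) => //; first exact: ainv_ge0.
by rewrite ainvK // (proj2 (proj2 (proj1 ha))).
Qed.

Lemma ext_eq (f : R -> R) s : 0 <= s -> f (Num.max s 0) = f s.
Proof. by move=> s0; congr f; apply/max_idPl. Qed.

End S12.

Lemma comp_contT (R : realType) (T : topologicalType) (f : T -> R) (g : R -> R) :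
  continuous f -> continuous g -> continuous (fun x => g (f x)).
Proof. by move=> cf cg x; apply: continuous_comp (cf x) (cg (f x)). Qed.

Theorem theorem1 (R : realType) (U X : completeNormedModType R)
  (phi : R -> X -> (R -> U) -> X) :
  control_system phi ->
  unique_equilibrium_0 phi ->
  (exists V : X -> R, FTISS_Lyapunov phi V) ->
  FTISS phi.
Proof.
move=> cs _ [V [Vc [V0 [M [sg [a1 [a2 [chi [M0 [/andP[sg0 sg1] [ha1 [ha2 [hchi [hsand hlie]]]]]]]]]]]]]].
have hb := sys_bound cs Vc V0 M0 sg0 sg1 ha1 ha2 hchi hsand hlie.
set p := 1 - sg in hb.
have p0 : 0 < p by rewrite /p; lra.
set q := p^-1 in hb.
have q0 : 0 < q by rewrite /q invr_gt0.
set k := M * p in hb.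
have k0 : 0 < k by rewrite /k mulr_gt0.
pose a2e s := a2 (Num.max s 0).
pose chie s := chi (Num.max s 0).
have ca2e : continuous a2e := ext_cont (proj1 (proj1 ha2)).
have cchie : continuous chie := ext_cont (proj1 hchi).
have cainv : continuous (ainv a1) := ainv_cont ha1.
pose b s t := ainv a1 (pw q (pw p (a2e s) - k * t)).
pose g r := ainv a1 (a2e (chie r)).
pose T s := k^-1 * pw p (a2e s).
have a2ge0 : forall s, 0 <= s -> 0 <= a2 s by apply: K_ge0 (proj1 ha2).
have chige0 : forall s, 0 <= s -> 0 <= chi s by apply: K_ge0 hchi.
have bs0 : forall s, 0 <= s -> b s 0 = ainv a1 (a2 s).
  move=> s s0; rewrite /b mulr0 subr0 /a2e (ext_eq _ s0).
  rewrite (pwE _ (a2ge0 _ s0)) (pwE _ (powR_ge0 _ _)) -powRrM /q divff ?gt_eqF //.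
  by rewrite powRr1 // a2ge0.
have bT : forall s t, T s <= t -> b s t = 0.
  move=> s t Tt; rewrite /b pw_neg //; first exact: ainv0.
  move: Tt; rewrite /T -(ler_pM2l k0) mulrA mulfV ?gt_eqF // mul1r; lra.
have bE : forall s t, b s t = ainv a1 (pw q (pw p (a2e s) + (- k) * t)).
  by move=> s t; rewrite /b mulNr.
exists b, g; split; [|split].
- split; [|split; [|split; [|split]]].
  + apply: continuous_subspaceT.
    have -> : (fun z : R * R => b z.1 z.2) =
      (fun z => ainv a1 (pw q ((fun x => pw p (a2e x)) z.1 + (fun t => (- k) * t) z.2))).
      by apply/funext => z; rewrite bE.
    apply: (comp_contT _ cainv); apply: (comp_contT _ (pw_cont q0)).
    move=> z; apply: cvgD.
      apply: (@continuous_comp _ _ _ fst (fun x => pw p (a2e x))); first exact: cvg_fst.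
      have H := comp_cont ca2e (pw_cont p0); exact: H.
    apply: (@continuous_comp _ _ _ snd (fun t => - k * t)); first exact: cvg_snd.
    have H := @lin_cont R (- k); exact: H.
  + by move=> s t _ _; apply: ainv_ge0.
  + split; [|split].
    * apply: continuous_subspaceT.
      have -> : (fun s => b s 0) = (fun s => ainv a1 (pw q (pw p (a2e s)))).
        by apply/funext => s; rewrite /b mulr0 subr0.
      apply: (comp_cont _ cainv); apply: (comp_cont _ (pw_cont q0)).
      exact: comp_cont ca2e (pw_cont p0).
    * move=> x y; rewrite !inE /Rge0 /= => x0 y0 xy.
      rewrite !bs0 //; apply: (ainv_lt ha1); first exact: a2ge0.
      exact: (K_lt (proj1 ha2)).
    * by rewrite bs0 // (proj2 (proj2 (proj1 ha2))) ainv0.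
  + move=> s s0; split; [|split].
    * apply: continuous_subspaceT.
      have -> : b s = (fun t => ainv a1 (pw q (pw p (a2e s) + (- k) * t))).
        by apply/funext => t; rewrite bE.
      apply: (comp_cont _ cainv); apply: (comp_cont _ (pw_cont q0)).
      move=> t; apply: cvgD; [exact: cvg_cst | have H := @lin_cont R (- k); exact: H].
    * move=> t1 t2; rewrite !inE /Rge0 /= => t10 t20 t12.
      apply: ainv_le ha1 _ _ _; apply: pw_le; first exact: ltW.
      have : k * t1 <= k * t2 by rewrite ler_wpM2l // ltW.
      lra.
    * apply/cvgrPdist_lt => e e0.
      exists (T s); split; first exact: num_real.
      by move=> t Tt; rewrite bT ?subrr ?normr0 // ltW.
  + exists T; split; [|split].
    * apply: continuous_subspaceT.
      have H := comp_cont (comp_cont ca2e (pw_cont p0)) (@lin_cont R k^-1); exact: H.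
    * by move=> s _; rewrite /T mulr_ge0 ?pw_ge0 // invr_ge0 ltW.
    * by move=> s t _; apply: bT.
- split; [|split].
  + apply: continuous_subspaceT.
    have H := comp_cont (comp_cont cchie ca2e) cainv; exact: H.
  + move=> x y; rewrite !inE /Rge0 /= => x0 y0 xy.
    rewrite /g /chie (ext_eq chi x0) (ext_eq chi y0) /a2e.
    rewrite (ext_eq a2 (chige0 _ x0)) (ext_eq a2 (chige0 _ y0)).
    apply: (ainv_lt ha1); first exact/a2ge0/chige0.
    apply: (K_lt (proj1 ha2)); first exact: chige0.
    exact: (K_lt hchi).
  + rewrite /g /chie /a2e maxxx (proj2 (proj2 hchi)) maxxx.
    by rewrite (proj2 (proj2 (proj1 ha2))) ainv0.
- move=> t x u t0 hu.
  have r0 := BCnorm_ge0 hu.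
  have := hb t x u t0 hu.
  set th := a2 (chi (BCnorm u)).
  set rho := _ `^ q.
  move=> hphi.
  have n0 := normr_ge0 (phi t x u).
  have h1 : `|phi t x u| <= ainv a1 (Num.max th rho).
    apply: ainv_ub ha1 _ _ n0 _.
    by apply: le_trans hphi; case/andP: (hsand (phi t x u)).
  have hrho : rho <= pw q (pw p (a2e `|x|) - k * t).
    apply: pw_le; first exact: ltW.
    rewrite /a2e (ext_eq _ (normr_ge0 x)) (pwE _ (a2ge0 _ (normr_ge0 x))).
    have : V x `^ p <= a2 `|x| `^ p.
      apply: ge0_ler_powR; [exact: ltW | by rewrite nnegrE | by rewrite nnegrE a2ge0 |].
      by case/andP: (hsand x).
    lra.
  have hb2 : ainv a1 rho <= b `|x| t by apply: ainv_le.
  have hg : ainv a1 th = g (BCnorm u).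
    by rewrite /g /chie (ext_eq chi r0) /a2e (ext_eq a2 (chige0 _ r0)).
  have g0 := ainv_ge0 ha1 th.
  have b0 := ainv_ge0 ha1 rho.
  have hmax : ainv a1 (Num.max th rho) <= ainv a1 th + ainv a1 rho.
    case: (leP th rho) => h.
      have : ainv a1 (Num.max th rho) <= ainv a1 rho.
        by apply: (ainv_le ha1); rewrite ge_max h lexx.
      lra.
    have : ainv a1 (Num.max th rho) <= ainv a1 th.
      by apply: (ainv_le ha1); rewrite ge_max lexx (ltW h).
    lra.
  rewrite -hg; lra.
Qed.
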